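(* Let $r\ge1$ be an integer and for $i=0,1,\dots,2r$ let $$G_{i,r}=\big((2r+1)K_1\big)\nabla\Big(\big((2r+1-i)K_1\big)\cup\big(K_1\nabla(i+1)K_1\big)\Big),$$ each of order $4r+4$. Then for every $i$, $LE(G_{i,r})=LE(K_{4r+4})=8r+6$ (so each $G_{i,r}$ is $L$-borderenergetic), and the $2r+1$ graphs $G_{0,r},\dots,G_{2r,r}$ have pairwise distinct Laplacian spectra, none equal to the Laplacian spectrum of $K_{4r+4}$.
   Context: All graphs are finite, simple and undirected. The Laplacian matrix of $G$ is $L(G)=D-A$ ($D$ degree matrix, $A$ adjacency matrix). For a graph $G$ on $n$ vertices with Laplacian eigenvalues $\mu_1,\dots,\mu_n$ and average degree $\overline d = 2|E(G)|/n$, the Laplacian energy is $LE(G)=\sum_{i=1}^n|\mu_i-\overline d|$. One has $LE(K_n)=2n-2$. A graph $G$ on $n$ vertices is $L$-borderenergetic if $LE(G)=LE(K_n)$. $K_m$ is the complete graph on $m$ vertices, $mG$ is the disjoint union of $m$ copies of $G$ ($0K_1$ is the empty graph), $\cup$ is disjoint union, and the join $G_1\nabla G_2$ is obtained from $G_1\cup G_2$ by adding all edges between a vertex of $G_1$ and a vertex of $G_2$. *)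

(* Defs.v *)
From HB Require Import structures.
From mathcomp Require Import all_boot all_order all_algebra all_field.
Set Implicit Arguments. Unset Strict Implicit. Unset Printing Implicit Defensive.
Import Order.TTheory GRing.Theory Num.Theory.
Local Open Scope ring_scope.

(* A finite graph: a finite vertex type with an adjacency relation.
   All graphs built below are simple (adjacency symmetric and irreflexive). *)
Record graph := Graph { vtype : finType; adj : rel vtype }.

Definition gorder (G : graph) : nat := #|vtype G|.

Definition Kn (n : nat) : graph := @Graph 'I_n (fun x y => x != y).
Definition mK1 (m : nat) : graph := @Graph 'I_m (fun _ _ => false).
Definition K1 : graph := mK1 1.

Definition gunion (G1 G2 : graph) : graph :=
  @Graph (vtype G1 + vtype G2)%type
    (fun x y => match x, y with
                | inl a, inl b => adj a b
                | inr a, inr b => adj a b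
                | _, _ => false end).

Definition gjoin (G1 G2 : graph) : graph :=
  @Graph (vtype G1 + vtype G2)%type
    (fun x y => match x, y with
                | inl a, inl b => adj a b
                | inr a, inr b => adj a b
                | _, _ => true end).

Definition deg (G : graph) (x : vtype G) : nat := #|[pred y | adj x y]|.

Definition laplacian (G : graph) : 'M[algC]_(gorder G) :=
  \matrix_(i, j)
    ((if i == j then (deg (enum_val i))%:R else 0)
     - (adj (enum_val i) (enum_val j))%:R).

(* Laplacian eigenvalues with multiplicity: the roots (with multiplicity)
   of the characteristic polynomial of L(G) over algC.  This sequence is
   determined up to permutation. *)
Definition lap_spectrum (G : graph) : seq algC :=
  proj1_sig (closed_field_poly_normal (char_poly (laplacian G))).

(* average degree 2|E|/n = (sum of degrees)/n *)
Definition avg_deg (G : graph) : algC :=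
  (\sum_(x : vtype G) deg x)%:R / (gorder G)%:R.

Definition LE (G : graph) : algC :=
  \sum_(mu <- lap_spectrum G) `|mu - avg_deg G|.

Definition L_borderenergetic (G : graph) : Prop := LE G = LE (Kn (gorder G)).

Definition G_ir (i r : nat) : graph :=
  gjoin (mK1 (2 * r + 1))
        (gunion (mK1 (2 * r + 1 - i)) (gjoin K1 (mK1 (i + 1)))).

(* Main.v *)
Require Import Defs.
From HB Require Import structures.
From mathcomp Require Import all_boot all_order all_algebra all_field.
From mathcomp Require Import ring lra zify.
Import Order.TTheory GRing.Theory Num.Theory.
Set Implicit Arguments. Unset Strict Implicit. Unset Printing Implicit Defensive.
Local Open Scope ring_scope.

Section Gen.
Variable R : comUnitRingType.

Lemma sylvester m n (A : 'M[R]_(m, n)) (B : 'M[R]_(n, m)) :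
  \det (1%:M + A *m B) = \det (1%:M + B *m A).
Proof.
have E1 : block_mx 1%:M (-A) B 1%:M =
   block_mx 1%:M 0 B 1%:M *m block_mx 1%:M (-A) 0 (1%:M + B *m A).
  rewrite mulmx_block ?mul1mx ?mul0mx ?mulmx0 ?addr0 ?add0r ?mulmx1.
  by rewrite mulmxN addrC addrK.
have E2 : block_mx 1%:M (-A) B 1%:M =
   block_mx (1%:M + A *m B) (-A) 0 1%:M *m block_mx 1%:M 0 B 1%:M.
  rewrite mulmx_block ?mul1mx ?mul0mx ?mulmx0 ?addr0 ?add0r ?mulmx1 ?mulNmx.
  by rewrite addrK.
have H1 := congr1 determinant E1; have H2 := congr1 determinant E2.
move: H1 H2; rewrite !det_mulmx !det_lblock !det_ublock !det1 !mul1r !mulr1 => ->.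
by [].
Qed.
End Gen.

Lemma charpoly_eval n (A : 'M[algC]_n) x : (char_poly A).[x] = \det (x%:M - A).
Proof.
rewrite /char_poly -[_.[x]]/(horner_eval x _) -det_map_mx; congr (\det _).
apply/matrixP => i j; rewrite !mxE; apply: (@etrans _ _ (('X *+ (i == j) - (A i j)%:P).[x])) => //; rewrite hornerD hornerN hornerC.
by rewrite hornerMn hornerX.
Qed.

Lemma det_struct n k (g : 'rV[algC]_n) (U : 'M[algC]_(n, k)) (C : 'M[algC]_k) :
  (forall j, g 0 j != 0) ->
  \det (diag_mx g + U *m C *m U^T) =
  (\prod_j g 0 j) * \det (1%:M + C *m U^T *m diag_mx (\row_j (g 0 j)^-1) *m U).
Proof.
move=> gnz; set gi := \row_j (g 0 j)^-1.
have DD : diag_mx g *m diag_mx gi = 1%:M.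
  apply/matrixP => i j; rewrite mul_diag_mx !mxE.
  by case: eqP => [->|_]; rewrite ?mulr0 // mulr1n mulfV.
have E : diag_mx g + U *m C *m U^T =
   diag_mx g *m (1%:M + (diag_mx gi *m U) *m (C *m U^T)).
  by rewrite mulmxDr mulmx1 !mulmxA DD mul1mx.
by rewrite E det_mulmx det_diag sylvester !mulmxA.
Qed.

Definition Qm (V : finType) k (cls : V -> 'I_k) (h : V -> algC) (x : algC) : 'M[algC]_k :=
  \matrix_(a, b) ((a == b)%:R * \sum_(v | cls v == a) (x - h v)^-1).

Lemma sum_ev (G : graph) (F : vtype G -> algC) :
  \sum_(j < gorder G) F (enum_val j) = \sum_(v : vtype G) F v.
Proof. by rewrite (big_enum_val F). Qed.

Lemma prod_ev (G : graph) (F : vtype G -> algC) :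
  \prod_(j < gorder G) F (enum_val j) = \prod_(v : vtype G) F v.
Proof. by rewrite (big_enum_val F). Qed.

Lemma lap_struct (G : graph) k (cls : vtype G -> 'I_k) (h : vtype G -> algC)
    (c : 'M[algC]_k) :
  (forall u v, (if u == v then (deg u)%:R else 0) - (adj u v)%:R
              = (if u == v then h u else 0) - c (cls u) (cls v)) ->
  forall x, (forall v, x != h v) ->
  (char_poly (laplacian G)).[x] =
    (\prod_(v : vtype G) (x - h v)) * \det (1%:M + c *m Qm cls h x).
Proof.
move=> Hs x Hx; rewrite charpoly_eval.
pose g : 'rV[algC]_(gorder G) := \row_j (x - h (enum_val j)).
pose U : 'M[algC]_(gorder G, k) := \matrix_(j, a) (cls (enum_val j) == a)%:R.
have UCU i j : (U *m c *m U^T) i j = c (cls (enum_val i)) (cls (enum_val j)).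
  rewrite !mxE (bigD1 (cls (enum_val j))) //= big1 ?addr0; last first.
    by move=> b /negPf nb; rewrite !mxE eq_sym nb mulr0.
  rewrite !mxE eqxx mulr1 (bigD1 (cls (enum_val i))) //= big1 ?addr0; last first.
    by move=> b /negPf nb; rewrite !mxE eq_sym nb mul0r.
  by rewrite !mxE eqxx mul1r.
have E : x%:M - laplacian G = diag_mx g + U *m c *m U^T.
  apply/matrixP => i j; rewrite [in RHS]mxE UCU !mxE.
  have := Hs (enum_val i) (enum_val j); rewrite (inj_eq enum_val_inj) => ->.
  by case: eqP => _; rewrite ?mulr1n ?mulr0n; ring.
rewrite E det_struct; last by move=> j; rewrite mxE subr_eq0.
have -> : \prod_j g 0 j = \prod_(v : vtype G) (x - h v).
  by rewrite -prod_ev; apply: eq_bigr => j _; rewrite mxE.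
congr (_ * \det (_ + _)); rewrite -!mulmxA; congr (_ *m _).
apply/matrixP => a b; rewrite mulmxA mul_mx_diag !mxE.
under eq_bigr => j _ do rewrite !mxE.
rewrite (sum_ev (fun v => (cls v == a)%:R * (x - h v)^-1 * (cls v == b)%:R)).
case: (eqVneq a b) => [<-|nab].
  rewrite mul1r [RHS]big_mkcond /=; apply: eq_bigr => v _.
  by case: (cls v == a); rewrite ?mulr1 ?mul1r ?mul0r ?mulr0.
rewrite mul0r big1 // => v _; case: (eqVneq (cls v) a) => [ea|]; last by rewrite !mul0r.
by rewrite -ea in nab; rewrite (negPf nab) mulr0.
Qed.

Lemma poly_eq_large (p q : {poly algC}) M :
  (forall k, (M <= k)%N -> p.[k%:R] = q.[k%:R]) -> p = q.
Proof.
move=> H; apply/eqP; rewrite -subr_eq0; apply/eqP.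
pose s : seq algC := [seq (M + k)%:R | k <- iota 0 (size (p - q))].
apply: (@roots_geq_poly_eq0 _ _ s).
- apply/allP => z /mapP [k _ ->]; rewrite /root hornerD hornerN H ?subrr //.
  exact: leq_addr.
- rewrite map_inj_uniq ?iota_uniq // => a b /eqP; rewrite eqr_nat => /eqP.
  exact: addnI.
- by rewrite size_map size_iota.
Qed.

Lemma spectrum_perm (G : graph) (s : seq algC) M :
  (forall k, (M <= k)%N ->
     (char_poly (laplacian G)).[k%:R] = \prod_(z <- s) (k%:R - z)) ->
  perm_eq (lap_spectrum G) s.
Proof.
move=> H.
have Ep : char_poly (laplacian G) = \prod_(z <- s) ('X - z%:P).
  apply: (poly_eq_large (M := M)) => k /H ->.
  by rewrite horner_prod; apply: eq_bigr => z _; rewrite hornerXsubC.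
rewrite /lap_spectrum; case: (closed_field_poly_normal _) => r /= Hr.
apply: prod_XsubC_eq; rewrite -Ep {1}Hr.
by rewrite (monicP (char_poly_monic _)) scale1r.
Qed.

Lemma sum_nseq (R : nmodType) (T : Type) m (a : T) (F : T -> R) :
  \sum_(z <- nseq m a) F z = F a *+ m.
Proof. by elim: m => [|m IH]; rewrite ?big_nil // big_cons IH mulrS. Qed.

Lemma prod_nseq (R : comPzSemiRingType) (T : Type) m (a : T) (F : T -> R) :
  \prod_(z <- nseq m a) F z = F a ^+ m.
Proof. by elim: m => [|m IH]; rewrite ?big_nil // big_cons IH exprS. Qed.

Lemma deg_Kn n (u : 'I_n) : @deg (Kn n) u = n.-1.
Proof.
rewrite /deg -[in RHS](card_ord n) -(cardC1 u); apply: eq_card => y.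
by rewrite !inE eq_sym.
Qed.

Definition natl (l : seq nat) : seq algC := [seq m%:R | m <- l].

Lemma Kn_spec n : (0 < n)%N ->
  perm_eq (lap_spectrum (Kn n)) (natl (0%N :: nseq n.-1 n)).
Proof.
case: n => // n _.
apply: (spectrum_perm (M := n.+2)) => k hk.
rewrite (@lap_struct (Kn n.+1) 1 (fun _ => ord0) (fun _ => n.+1%:R) 1%:M); last 2 first.
- move=> u v; rewrite deg_Kn /= !mxE /=.
  by case: eqP => _ /=; rewrite ?subr0 ?sub0r // -natr1 addrK.
- by move=> v; rewrite eqr_nat; apply/eqP => e; rewrite e ltnn in hk.
rewrite mul1mx det_mx11 !mxE /= mul1r.
rewrite big_cons /natl big_map prod_nseq prodr_const card_ord subr0.
rewrite (eq_bigl predT) // sumr_const card_ord.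
have nz : k%:R - n.+1%:R != 0 :> algC.
  by rewrite subr_eq0 eqr_nat; apply/eqP => e; rewrite e ltnn in hk.
rewrite exprS -mulr_natl; field; by rewrite -natr1 [n%:R + 1]addrC in nz.
Qed.

Lemma LE_perm G s : perm_eq (lap_spectrum G) s ->
  LE G = \sum_(mu <- s) `|mu - avg_deg G|.
Proof. by move=> P; rewrite /LE (perm_big _ P). Qed.

Lemma avg_Kn m : avg_deg (Kn m.+1) = m%:R.
Proof.
rewrite /avg_deg /gorder /=.
rewrite (eq_bigr (fun _ => m)) => [|x _]; last by rewrite deg_Kn.
rewrite sum_nat_const !card_ord natrM mulrC mulKf //.
by rewrite pnatr_eq0.
Qed.

Lemma LE_Kn m : LE (Kn m.+1) = (m + m)%:R.
Proof.
rewrite (LE_perm (Kn_spec (ltn0Sn m))) avg_Kn /natl /= big_cons big_map sum_nseq.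
rewrite sub0r normrN normr_nat -natr1 addrAC subrr add0r normr1 natrD.
by rewrite -[in X in _ + X](mulr1 m%:R) mulr_natl.
Qed.
Definition f4 (q0 q1 q2 q3 : algC) (a b : nat) : algC :=
  match a, b with
  | 0, 0 => 1 | 0, 1 => q1 | 0, 2 => q2 | 0, 3 => q3
  | 1, 0 => q0 | 1, 1 => 1 | 1, _ => 0
  | 2, 0 => q0 | 2, 2 => 1 | 2, 3 => q3 | 2, _ => 0
  | 3, 0 => q0 | 3, 2 => q2 | 3, 3 => 1 | _, _ => 0 end.

Lemma det4 q0 q1 q2 q3 :
  \det (\matrix_(i < 4, j < 4) f4 q0 q1 q2 q3 i j) =
  - q0 * q1 * (1 - q2 * q3) + (1 - q2 * q3 - q0 * q2 - q0 * q3 + 2 * q0 * q2 * q3).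
Proof.
rewrite !(expand_det_row _ ord0) /cofactor !big_ord_recr big_ord0 /=.
rewrite !(expand_det_row _ ord0) /cofactor !big_ord_recr !big_ord0 /=.
rewrite !(expand_det_row _ ord0) /cofactor !big_ord_recr !big_ord0 /=.
rewrite !det_mx11 !mxE /=.
ring.
Qed.
Unset Implicit Arguments.

Definition clsG i r (v : vtype (G_ir i r)) : 'I_4 :=
  match v with
  | inl _ => @Ordinal 4 0 isT
  | inr (inl _) => @Ordinal 4 1 isT
  | inr (inr (inl _)) => @Ordinal 4 2 isT
  | inr (inr (inr _)) => @Ordinal 4 3 isT end.

Definition hdeg i r (v : vtype (G_ir i r)) : nat :=
  match v with
  | inl _ => 2 * r + 3
  | inr (inl _) => 2 * r + 1
  | inr (inr (inl _)) => 2 * r + 2 + i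
  | inr (inr (inr _)) => 2 * r + 2 end.

Lemma deg_G i r (v : vtype (G_ir i r)) : (i <= 2 * r + 1)%N -> deg v = hdeg i r v.
Proof.
move=> hi; rewrite /deg -sum1_card big_mkcond /= !big_sumType /=.
case: v => [a|[b|[c|d]]] /=; rewrite ?big_const_ord /=.
all: rewrite !iter_addn_0; lia.
Qed.

Definition cadj (a b : nat) : bool :=
  match a, b with
  | 0, 0 => false | 0, _ => true | _, 0 => true
  | 2, 3 => true | 3, 2 => true | _, _ => false end.

Definition cM : 'M[algC]_4 := \matrix_(a, b) (cadj a b)%:R.

Definition tgtG i r : seq nat :=
  [:: 0%N; (4 * r + 4)%N; (2 * r + 3 + i)%N] ++ nseq (2 * r) (2 * r + 3)%N
  ++ nseq (2 * r + 1 - i) (2 * r + 1)%N ++ nseq i (2 * r + 2)%N.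

Lemma G_spec i r : (i <= 2 * r)%N ->
  perm_eq (lap_spectrum (G_ir i r)) (natl (tgtG i r)).
Proof.
move=> hi; have hi1 : (i <= 2 * r + 1)%N by lia.
apply: (spectrum_perm (M := (4 * r + 5)%N)) => k hk.
rewrite (@lap_struct (G_ir i r) 4 (@clsG i r) (fun v => (deg v)%:R) cM); last 2 first.
- move=> u v; congr (_ - _).
  by case: u => [a|[b|[c|d]]]; case: v => [a'|[b'|[c'|d']]]; rewrite /= !mxE.
- by move=> v; rewrite eqr_nat deg_G //; case: v => [a|[b|[c|d]]] /=; apply/eqP; lia.
set x : algC := k%:R.
pose q0 := (2 * r + 1)%:R / (x - (2 * r + 3)%:R).
pose q1 := (2 * r + 1 - i)%:R / (x - (2 * r + 1)%:R).
pose q2 := 1 / (x - (2 * r + 2 + i)%:R).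
pose q3 := (i + 1)%:R / (x - (2 * r + 2)%:R).
have Sq : forall b : 'I_4, \sum_(v | clsG i r v == b) (x - (deg v)%:R)^-1
    = [:: q0; q1; q2; q3]`_b.
  move=> b; rewrite (eq_bigr (fun v => (x - (hdeg i r v)%:R)^-1)); last first.
    by move=> v _; rewrite deg_G.
  rewrite big_mkcond !big_sumType /=.
  case: b => [[|[|[|[|b]]]] Hb] //=;
    rewrite !sumr_const !card_ord ?mul0rn ?addr0 ?add0r;
    by rewrite /q0 /q1 /q2 /q3 [RHS]mulrC ?mulr_natr ?mulr1 ?mulr1n.
have EM : 1%:M + cM *m Qm (clsG i r) (fun v => (deg v)%:R) x =
          \matrix_(a < 4, b < 4) f4 q0 q1 q2 q3 a b.
  apply/matrixP => a b; rewrite !mxE (bigD1 b) //= big1 ?addr0; last first.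
    by move=> l nl; rewrite !mxE (negPf nl) mul0r mulr0.
  rewrite !mxE eqxx mul1r Sq.
  by case: a => [[|[|[|[|a]]]] Ha]; case: b => [[|[|[|[|b]]]] Hb] //=;
    rewrite ?mul0r ?mul1r ?addr0 ?add0r.
rewrite EM det4.
rewrite (eq_bigr (fun v => x - (hdeg i r v)%:R)) => [|v _]; last by rewrite deg_G.
rewrite !big_sumType /= !prodr_const !card_ord.
rewrite !big_cons /natl !map_cat !big_cat !big_map !prod_nseq.
have P1 : forall y : algC, y ^+ (2*r+1) = y ^+ (2*r) * y by move=> y; rewrite addn1 exprSr.
have P2 : forall y : algC, y ^+ (i+1) = y ^+ i * y by move=> y; rewrite addn1 exprSr.
rewrite !P1 !P2 /q0 /q1 /q2 /q3 natrB //= expr1.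
field.
rewrite -!natrM -!natrD ?natr1 !subr_eq0 !eqr_nat.
by apply/and4P; split; apply/eqP; lia.
Qed.

Definition Snat i r := (8 * r * r + 16 * r + 8 + 2 * i)%N.

Lemma LE_rat i r : (i <= 2 * r)%N ->
  \sum_(m <- tgtG i r) `|(m%:R : rat) - (Snat i r)%:R / (4 * r + 4)%:R| = (8 * r + 6)%:R.
Proof.
move=> hi.
have hR : 0 <= r%:R :> rat by rewrite ler0n.
have hI : 0 <= i%:R :> rat by rewrite ler0n.
have hIR : i%:R <= 2 * r%:R :> rat by rewrite -natrM ler_nat.
have h2 : 2 * r%:R + 2 != 0 :> rat by apply: lt0r_neq0; lra.
set t : rat := i%:R / (2 * r%:R + 2).
have t0 : 0 <= t by rewrite /t divr_ge0 //; lra.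
have t1 : t <= 1 by rewrite /t ler_pdivrMr; lra.
have Ea : (Snat i r)%:R / (4 * r + 4)%:R = 2 * r%:R + 2 + t.
  rewrite /Snat /t !natrD !natrM; field.
  apply/andP; split; apply: lt0r_neq0; lra.
rewrite Ea /tgtG !big_cat /= !big_cons big_nil !sum_nseq.
clearbody t.
rewrite !natrD.
rewrite ler0_norm; last by lra.
rewrite ger0_norm; last by lra.
rewrite ger0_norm; last by lra.
rewrite ger0_norm; last by lra.
rewrite ler0_norm; last by lra.
rewrite ler0_norm; last by lra.
rewrite mulrnBr; last by lia.
ring.
Qed.

Lemma avg_G i r : (i <= 2 * r)%N ->
  avg_deg (G_ir i r) = ratr ((Snat i r)%:R / (4 * r + 4)%:R).
Proof.
move=> hi; rewrite /avg_deg /gorder /= !card_sum !card_ord.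
rewrite (eq_bigr (hdeg i r)) => [|v _]; last by rewrite deg_G //; lia.
rewrite !big_sumType /= !sum_nat_const !card_ord.
rewrite fmorph_div !rmorph_nat /Snat.
congr (_%:R / _%:R); nia.
Qed.

Lemma LE_G i r : (i <= 2 * r)%N -> LE (G_ir i r) = (8 * r + 6)%:R.
Proof.
move=> hi; rewrite (LE_perm (G_spec i r hi)) avg_G // /natl big_map.
have H m : `|(m%:R : algC) - ratr ((Snat i r)%:R / (4 * r + 4)%:R)|
           = ratr `|(m%:R : rat) - (Snat i r)%:R / (4 * r + 4)%:R|.
  by rewrite ratr_norm rmorphB rmorph_nat.
under eq_bigr => m _ do rewrite H.
by rewrite -rmorph_sum LE_rat // rmorph_nat.
Qed.

Lemma count_natl (l : seq nat) m : count_mem (m%:R : algC) (natl l) = count_mem m l.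
Proof. by rewrite /natl count_map; apply: eq_count => z /=; rewrite eqr_nat. Qed.

Lemma count_tgt i r : (i <= 2 * r)%N -> count_mem (2 * r + 1)%N (tgtG i r) = (2 * r + 1 - i)%N.
Proof.
move=> hi; rewrite /tgtG !count_cat /= !count_nseq /=.
by repeat (case: eqP => ? /=); lia.
Qed.

Lemma count_Kn r : count_mem (2 * r + 1)%N (0%N :: nseq (4 * r + 4).-1 (4 * r + 4)%N) = 0%N.
Proof.
rewrite /= count_nseq /=.
by repeat (case: eqP => ? /=); lia.
Qed.

Theorem theorem6 (r : nat) (hr : (1 <= r)%N) :
  (forall i : nat, (i <= 2 * r)%N ->
     gorder (G_ir i r) = (4 * r + 4)%N /\
     LE (G_ir i r) = LE (Kn (4 * r + 4)) /\
     LE (Kn (4 * r + 4)) = (8 * r + 6)%:R /\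
     L_borderenergetic (G_ir i r)) /\
  (forall i j : nat, (i <= 2 * r)%N -> (j <= 2 * r)%N -> i <> j ->
     ~ perm_eq (lap_spectrum (G_ir i r)) (lap_spectrum (G_ir j r))) /\
  (forall i : nat, (i <= 2 * r)%N ->
     ~ perm_eq (lap_spectrum (G_ir i r)) (lap_spectrum (Kn (4 * r + 4)))).
Proof.
have LK : LE (Kn (4 * r + 4)) = (8 * r + 6)%:R.
  have -> : (4 * r + 4 = (4 * r + 3).+1)%N by lia.
  by rewrite LE_Kn; congr (_%:R); lia.
have go i : (i <= 2 * r)%N -> gorder (G_ir i r) = (4 * r + 4)%N.
  by move=> hi; rewrite /gorder /= !card_sum !card_ord; lia.
split; [|split].
- move=> i hi; split; first exact: go.
  have E : LE (G_ir i r) = LE (Kn (4 * r + 4)) by rewrite LE_G // LK.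
  split; first exact: E.
  split; first exact: LK.
  by rewrite /L_borderenergetic go.
- move=> i j hi hj nij P.
  have P' : perm_eq (natl (tgtG i r)) (natl (tgtG j r)).
    apply: (perm_trans _ (perm_trans P (G_spec j r hj))).
    by rewrite perm_sym; exact: G_spec i r hi.
  have := (permP P') (pred1 ((2 * r + 1)%N%:R)).
  rewrite !count_natl !count_tgt //; lia.
- move=> i hi P.
  have P' : perm_eq (natl (tgtG i r)) (natl (0%N :: nseq (4 * r + 4).-1 (4 * r + 4)%N)).
    have K := @Kn_spec (4 * r + 4) ltac:(lia).
    apply: (perm_trans _ (perm_trans P K)).
    by rewrite perm_sym; exact: G_spec i r hi.
  have := (permP P') (pred1 ((2 * r + 1)%N%:R)).
  rewrite !count_natl count_tgt // count_Kn; lia.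
Qed.
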